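(* Let $\nu>0$, $d\ge1$ an integer and $m\ge1$ an integer. Then \[ I(d,\nu,m):=\sum_{n>m}\ \sum_{q\in\mathbb{Z}^{d-1}}\left(n^2+|q|^2\right)^{-\nu-d/2}\;\le\;\frac{\beta(d,\nu)}{m^{2\nu}}, \] where the sum over $n$ runs over integers $n>m$ and $\beta$ is defined by $\beta(1,\nu)=\frac{1}{2\nu}$ and $\beta(d,\nu)=\left(4+\frac{2}{2\nu+d-1}\right)\beta(d-1,\nu)$ for $d>1$. In particular, for any $\nu\ge 1/2$, $\beta(d,\nu)\le \frac{5^{d-1}}{2\nu}$ for all $d=1,2,\dots$.
   Context: $|q|$ denotes the Euclidean norm of $q\in\mathbb{Z}^{d-1}$; when $d=1$ the inner sum over $\mathbb{Z}^{0}$ consists of the single term $q=0$ (so $I(1,\nu,m)=\sum_{n>m}n^{-2\nu-1}$). *)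

(* Defs.v *)
From HB Require Import structures.
From mathcomp Require Import all_boot all_order all_algebra.
From mathcomp Require Import all_classical all_reals all_analysis.
Set Implicit Arguments. Unset Strict Implicit. Unset Printing Implicit Defensive.
Import Order.TTheory GRing.Theory Num.Theory.
Local Open Scope ring_scope.

(* betaS nu k = beta(k+1, nu):  beta(1,nu) = 1/(2 nu),
   beta(d,nu) = (4 + 2/(2 nu + d - 1)) beta(d-1,nu) for d > 1. *)
Fixpoint betaS {R : realType} (nu : R) (k : nat) : R :=
  match k with
  | 0 => 1 / (2 * nu)
  | k'.+1 => (4 + 2 / (2 * nu + k'.+1%:R)) * betaS nu k'
  end.

Definition beta {R : realType} (d : nat) (nu : R) : R := betaS nu d.-1.

Definition sqnorm {R : realType} (k : nat) (q : 'rV[int]_k) : R :=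
  \sum_(i < k) ((q ord0 i)%:~R) ^+ 2.

Definition Iterm {R : realType} (d : nat) (nu : R) (p : nat * 'rV[int]_(d.-1)) : R :=
  ((p.1)%:R ^+ 2 + sqnorm p.2) `^ (- nu - d%:R / 2).

Definition Isum {R : realType} (d : nat) (nu : R) (m : nat) : \bar R :=
  esum [set p : nat * 'rV[int]_(d.-1) | (m < p.1)%N] (fun p => (@Iterm R d nu p)%:E).

(* Main.v *)
Require Import Defs.
From HB Require Import structures.
From mathcomp Require Import all_boot all_order all_algebra.
From mathcomp Require Import all_classical all_reals all_analysis.
From mathcomp Require Import ring lra.
From mathcomp Require Import finmap.
Import Order.TTheory GRing.Theory Num.Theory.
Local Open Scope ring_scope.
Set Implicit Arguments. Unset Strict Implicit.

Section S.
Variable R : realType.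

Lemma powRE (x p : R) : 0 < x -> x `^ p = expR (p * ln x).
Proof. by move=> x0; rewrite /powR gt_eqF. Qed.

Lemma powR_anti (x y p : R) : 0 < x -> x <= y -> 0 <= p -> y `^ (- p) <= x `^ (- p).
Proof.
move=> x0 xy p0; have y0 : 0 < y by apply: lt_le_trans xy.
rewrite !powRE // ler_expR !mulNr lerN2; apply: ler_wpM2l => //.
by rewrite ler_ln.
Qed.

Lemma tangent (x y a : R) : 0 < y -> y <= x -> 0 < a ->
  a * (x - y) * (x `^ (- a) / x) <= y `^ (- a) - x `^ (- a).
Proof.
move=> y0 yx a0; have x0 : 0 < x by apply: lt_le_trans yx.
set u := ln x - ln y.
have hy : y `^ (- a) = x `^ (- a) * expR (a * u).
  by rewrite !powRE // -expRD /u; congr expR; ring.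
have hu : 1 - y / x <= u.
  have h := @le_ln1Dx R (y / x - 1).
  have : -1 < y / x - 1 by have := divr_gt0 y0 x0; lra.
  move/h; rewrite addrC subrK ln_div ?posrE // /u; lra.
have he := expR_ge1Dx (a * u).
have hx := powR_gt0 (- a) x0.
rewrite hy.
have -> : a * (x - y) * (x `^ (- a) / x) = x `^ (- a) * (a * (1 - y / x)).
  by field; rewrite gt_eqF.
have : a * (1 - y / x) <= a * u by rewrite ler_wpM2l // ltW.
nra.
Qed.

Lemma sum_tele_le (u G : nat -> R) N :
  (forall k, u k <= G k - G k.+1) -> \sum_(0 <= k < N) u k <= G 0%N - G N.
Proof.
move=> h; elim: N => [|N IH]; first by rewrite big_geq // subrr.
rewrite big_nat_recr //=; have := h N; lra.
Qed.

Lemma sqpow (x a : R) : 0 < x -> (x ^+ 2) `^ (- ((a + 1) / 2)) = x `^ (- a) / x.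
Proof.
move=> x0.
rewrite -powR_mulrn ?ltW // -powRrM.
have -> : 2%:R * - ((a + 1) / 2) = - a + - (1 : R) by field.
rewrite powRD; last by rewrite (gt_eqF x0) implybT.
by rewrite (powRN x 1) powRr1 // ltW.
Qed.

Definition GG (r a x : R) := if x <= r then r `^ (- a) / a + (r - x) * (r ^+ 2) `^ (- ((a + 1) / 2)) else x `^ (- a) / a.

Lemma GG_ge0 (r a x : R) : 1 <= r -> 0 < a -> 0 <= GG r a x.
Proof.
move=> r1 a0.
rewrite /GG; case: ifP => xr.
  have h1 := powR_ge0 r (- a); have h2 := powR_ge0 (r ^+ 2) (- ((a + 1) / 2)).
  apply: addr_ge0; first by apply: divr_ge0 => //; apply: ltW.
  by apply: mulr_ge0 => //; rewrite subr_ge0.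
by apply: divr_ge0 => //; [apply: powR_ge0 | apply: ltW].
Qed.

Lemma s_ge0 (a : R) : 0 < a -> 0 <= (a + 1) / 2.
Proof. move=> a0; apply: divr_ge0; lra. Qed.

Lemma GG_step (r a x y : R) : 1 <= r -> 0 < a -> 0 <= y -> y <= x ->
  (x - y) * (r ^+ 2 + x ^+ 2) `^ (- ((a + 1) / 2)) <= GG r a y - GG r a x.
Proof.
move=> r1 a0 y0 yx.
set s := (a + 1) / 2.
set c := (r ^+ 2) `^ (- s).
have s0 : 0 <= s by apply: s_ge0.
have r0 : 0 < r by lra.
have r20 : 0 < r ^+ 2 by rewrite exprn_gt0.
have hc : (r ^+ 2 + x ^+ 2) `^ (- s) <= c.
  by apply: powR_anti => //; rewrite ?lerDl ?sqr_ge0.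
rewrite /GG; case: ifP => yr; case: ifP => xr.
- have -> : r `^ (- a) / a + (r - y) * c - (r `^ (- a) / a + (r - x) * c) = (x - y) * c by ring.
  rewrite ler_wpM2l //; lra.
- have xr' : r < x by rewrite ltNge xr.
  have x0 : 0 < x by lra.
  have ht := @tangent x r a r0 (ltW xr') a0.
  have hx : (r ^+ 2 + x ^+ 2) `^ (- s) <= x `^ (- a) / x.
    rewrite -sqpow //; apply: powR_anti; rewrite ?exprn_gt0 ?lerDr ?sqr_ge0 //; exact: s_ge0.
  have hp : 0 <= (r ^+ 2 + x ^+ 2) `^ (- s) := powR_ge0 _ _.
  have e1 : r `^ (- a) / a + (r - y) * c - x `^ (- a) / a =
            (r - y) * c + (r `^ (- a) - x `^ (- a)) / a by field; rewrite gt_eqF.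
  rewrite e1.
  have h1 : (r - y) * (r ^+ 2 + x ^+ 2) `^ (- s) <= (r - y) * c.
    by rewrite ler_wpM2l //; lra.
  have h2 : (x - r) * (r ^+ 2 + x ^+ 2) `^ (- s) <= (r `^ (- a) - x `^ (- a)) / a.
    rewrite ler_pdivlMr //.
    apply: le_trans ht.
    have -> : (x - r) * (r ^+ 2 + x ^+ 2) `^ (- s) * a = a * (x - r) * (r ^+ 2 + x ^+ 2) `^ (- s) by ring.
    apply: ler_wpM2l => //; apply: mulr_ge0; lra.
  have -> : (x - y) * (r ^+ 2 + x ^+ 2) `^ (- s) =
     (r - y) * (r ^+ 2 + x ^+ 2) `^ (- s) + (x - r) * (r ^+ 2 + x ^+ 2) `^ (- s) by ring.
  exact: lerD.
- exfalso; have : y <= r by lra. by rewrite yr.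
- have yr' : r < y by rewrite ltNge yr.
  have y0' : 0 < y by lra.
  have x0 : 0 < x by lra.
  have ht := @tangent x y a y0' yx a0.
  have hx : (r ^+ 2 + x ^+ 2) `^ (- s) <= x `^ (- a) / x.
    rewrite -sqpow //; apply: powR_anti; rewrite ?exprn_gt0 ?lerDr ?sqr_ge0 //; exact: s_ge0.
  rewrite -mulrBl ler_pdivlMr //.
  apply: le_trans ht.
  have -> : (x - y) * (r ^+ 2 + x ^+ 2) `^ (- s) * a = a * (x - y) * (r ^+ 2 + x ^+ 2) `^ (- s) by ring.
  apply: ler_wpM2l => //; apply: mulr_ge0; lra.
Qed.

Lemma GG0 (r a : R) : 1 <= r -> 0 < a -> GG r a 0 = r `^ (- a) * (1 / a + 1).
Proof.
move=> r1 a0.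
rewrite /GG; have -> : (0 <= r) = true by apply/idP; lra.
have r0 : 0 < r by lra.
rewrite sqpow // subr0; field; rewrite !gt_eqF //.
Qed.

Lemma jsum_pos (r a : R) (N : nat) : 1 <= r -> 0 < a ->
  \sum_(0 <= k < N) (r ^+ 2 + (k.+1)%:R ^+ 2) `^ (- ((a + 1) / 2)) <= r `^ (- a) * (1 / a + 1).
Proof.
move=> r1 a0.
rewrite -GG0 //.
have -> : GG r a 0 = GG r a (0%N)%:R by [].
apply: le_trans (@sum_tele_le _ (fun k => GG r a k%:R) N _) _.
  move=> k; have := @GG_step r a (k.+1)%:R k%:R r1 a0 (ler0n _ _).
  rewrite ler_nat leqnSn -natrB // subSnn mul1r; apply => //.
have := @GG_ge0 r a N%:R r1 a0; lra.
Qed.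

Definition js (N : nat) : seq int :=
  0 :: [seq (k.+1)%:Z | k <- index_iota 0 N] ++ [seq - (k.+1)%:Z | k <- index_iota 0 N].

Lemma intr_nat (k : nat) : ((k%:Z)%:~R : R) = k%:R.
Proof. by rewrite -pmulrn. Qed.

Lemma jsum (r a : R) (N : nat) : 1 <= r -> 0 < a ->
  \sum_(j <- js N) (r ^+ 2 + ((j%:~R : R)) ^+ 2) `^ (- ((a + 1) / 2))
    <= (4 + 2 / a) * r `^ (- a).
Proof.
move=> r1 a0; have r0 : 0 < r by lra.
rewrite big_cons big_cat !big_map /=.
under eq_bigr do rewrite intr_nat.
under [X in _ + (_ + X) <= _]eq_bigr do rewrite mulrNz sqrrN intr_nat.
have h := jsum_pos N r1 a0.
rewrite mulr0z expr0n /= addr0 sqpow //.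
have hP := powR_ge0 r (- a).
have hX : r `^ (- a) / r <= r `^ (- a).
  by rewrite ler_pdivrMr // ler_peMr.
have -> : (4 + 2 / a) * r `^ (- a) = 2 * (r `^ (- a) * (1 / a + 1)) + 2 * r `^ (- a).
  by field; rewrite gt_eqF.
lra.
Qed.

Definition ext (k : nat) (j : int) (q : 'rV[int]_k) : 'rV[int]_k.+1 :=
  \row_(i < k.+1) (if unlift ord0 i is Some i' then q ord0 i' else j).

Fixpoint box (N k : nat) : seq 'rV[int]_k :=
  match k return seq 'rV[int]_k with
  | 0 => [:: 0]
  | k'.+1 => [seq ext j q | q <- box N k', j <- js N]
  end.

Lemma sqnorm_ext k (j : int) (q : 'rV[int]_k) :
  @sqnorm R k.+1 (ext j q) = (j%:~R) ^+ 2 + sqnorm q.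
Proof.
rewrite /sqnorm big_ord_recl !mxE unlift_none; congr (_ + _).
by apply: eq_bigr => i _; rewrite mxE liftK.
Qed.

Lemma sqnorm_ge0 k (q : 'rV[int]_k) : 0 <= @sqnorm R k q.
Proof. by apply: sumr_ge0 => i _; apply: sqr_ge0. Qed.

Lemma box_sum (g : R -> R) N k :
  \sum_(q <- box N k.+1) g (sqnorm q) =
  \sum_(q <- box N k) \sum_(j <- js N) g ((j%:~R) ^+ 2 + sqnorm q).
Proof.
rewrite (_ : box N k.+1 = [seq ext j q | q <- box N k, j <- js N]) //.
rewrite big_allpairs_dep; apply: eq_bigr => q _; apply: eq_bigr => j _.
by rewrite sqnorm_ext.
Qed.


Lemma jsumA (A a : R) (N : nat) : 1 <= A -> 0 < a ->
  \sum_(j <- js N) (A + ((j%:~R : R)) ^+ 2) `^ (- ((a + 1) / 2))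
    <= (4 + 2 / a) * A `^ (- (a / 2)).
Proof.
move=> A1 a0.
have A0 : 0 <= A by lra.
have r1 : 1 <= Num.sqrt A by rewrite -sqrtr1 ler_sqrt //; lra.
have := jsum N r1 a0; rewrite sqr_sqrtr //.
have -> : Num.sqrt A `^ (- a) = A `^ (- (a / 2)); last by [].
by rewrite -powR12_sqrt // -powRrM; congr (_ `^ _); field.
Qed.

Lemma tele_gen (u G : nat -> R) m N :
  (forall k, (m <= k)%N -> u k <= G k - G k.+1) -> (forall k, 0 <= G k) ->
  \sum_(m <= k < N) u k <= G m.
Proof.
move=> hu hG; case: (leqP m N) => mN; last by rewrite big_geq // ltnW.
suff : \sum_(m <= k < N) u k <= G m - G N by have := hG N; lra.
elim: N mN => [|N IH] mN.
  by move: mN; rewrite leqn0 => /eqP ->; rewrite big_geq // subrr.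
move: mN; rewrite leq_eqVlt => /orP [/eqP <-|mN].
  by rewrite big_geq // subrr.
rewrite big_nat_recr //=; have := IH mN; have := hu N mN; lra.
Qed.

Lemma sqnorm0 k : @sqnorm R k 0 = 0.
Proof. by rewrite /sqnorm big1 // => i _; rewrite mxE mulr0z expr0n. Qed.

End S.

Section S.
Variable R : realType.
Lemma main_ineq (nu : R) (m k N : nat) : 0 < nu -> (1 <= m)%N ->
  \sum_(m.+1 <= n < N.+1) \sum_(q <- box N k)
     ((n%:R) ^+ 2 + sqnorm q) `^ (- nu - (k.+1)%:R / 2)
  <= betaS nu k / (m%:R `^ (2 * nu)).
Proof.
move=> nu0 m1; elim: k => [|k IH].
- rewrite /=.
  under eq_bigr do rewrite big_cons big_nil addr0 sqnorm0 addr0.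
  set a := 2 * nu.
  have a0 : 0 < a by rewrite /a; lra.
  have -> : - nu - 1%:R / 2 = - ((a + 1) / 2) by rewrite /a; field.
  rewrite big_add1 /=.
  have m0 : 0 < m%:R :> R by rewrite ltr0n.
  have -> : 1 / (2 * nu) / m%:R `^ (2 * nu) = m%:R `^ (- a) / a.
    by rewrite powRN /a; field; rewrite gt_eqF // gt_eqF // powR_gt0.
  apply: (@tele_gen R _ (fun n => n%:R `^ (- a) / a)).
    move=> n mn; rewrite sqpow ?ltr0n //.
    have n0 : 0 < n%:R :> R by rewrite ltr0n; apply: leq_trans mn.
    have hle : n%:R <= (n.+1)%:R :> R by rewrite ler_nat.
    have h := @tangent R (n.+1)%:R n%:R a n0 hle a0.
    rewrite -natrB // subSnn mulr1n mulr1 in h.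
    rewrite -mulrBl ler_pdivlMr // mulrC; exact: h.
  move=> n; apply: divr_ge0; [exact: powR_ge0 | lra].
- set a := 2 * nu + (k.+1)%:R.
  have a0 : 0 < a by rewrite /a; have := ler0n R k.+1; lra.
  set c := 4 + 2 / a.
  have c0 : 0 <= c by rewrite /c; have := divr_gt0 (ltr0Sn R 1) a0; lra.
  apply: le_trans (_ : \sum_(m.+1 <= n < N.+1) \sum_(q <- box N k)
      c * ((n%:R) ^+ 2 + sqnorm q) `^ (- nu - (k.+1)%:R / 2) <= _).
    rewrite big_nat [X in _ <= X]big_nat; apply: ler_sum => n /andP [mn _].
    rewrite (box_sum (fun x => ((n%:R) ^+ 2 + x) `^ (- nu - (k.+2)%:R / 2))).
    apply: ler_sum => q _.
    have A1 : 1 <= (n%:R : R) ^+ 2 + sqnorm q.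
      have : 1 <= (n%:R : R) ^+ 2.
        by rewrite -natrX ler1n expn_gt0 (leq_ltn_trans (leq0n m) mn).
      have := @sqnorm_ge0 R k q; lra.
    have := @jsumA R _ a N A1 a0.
    have -> : - (a / 2) = - nu - (k.+1)%:R / 2 by rewrite /a; field.
    have -> : - ((a + 1) / 2) = - nu - (k.+2)%:R / 2.
      by rewrite /a (mulrSr _ k.+1); field.
    move=> h; apply: le_trans h; rewrite le_eqVlt; apply/orP; left; apply/eqP.
    by apply: eq_bigr => j _; congr (_ `^ _); ring.
  have -> : \sum_(m.+1 <= n < N.+1) \sum_(q <- box N k)
      c * ((n%:R) ^+ 2 + sqnorm q) `^ (- nu - (k.+1)%:R / 2) =
    c * \sum_(m.+1 <= n < N.+1) \sum_(q <- box N k)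
      ((n%:R) ^+ 2 + sqnorm q) `^ (- nu - (k.+1)%:R / 2).
    by rewrite mulr_sumr; apply: eq_bigr => n _; rewrite mulr_sumr.
  rewrite /= -mulrA; exact: ler_wpM2l.
Qed.

End S.

Lemma js_mem (N : nat) (j : int) : (absz j <= N)%N -> j \in js N.
Proof.
case: j => [[|n]|n] hj; rewrite /js inE ?eqxx //; apply/orP; right; rewrite mem_cat.
  by apply/orP; left; apply/mapP; exists n => //; rewrite mem_index_iota.
by apply/orP; right; apply/mapP; exists n; rewrite ?mem_index_iota // NegzE.
Qed.

Definition tailr k (q : 'rV[int]_k.+1) : 'rV[int]_k := \row_(i < k) q ord0 (lift ord0 i).

Lemma ext_tail k (q : 'rV[int]_k.+1) : ext (q ord0 ord0) (tailr q) = q.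
Proof.
apply/rowP => i; rewrite !mxE; case: unliftP => [i' ->|->] //.
by rewrite mxE.
Qed.

Lemma box_mem N k (q : 'rV[int]_k) : (forall i, absz (q ord0 i) <= N)%N -> q \in box N k.
Proof.
elim: k q => [|k IH] q hq.
  by rewrite /= inE (thinmx0 q).
apply/allpairsP; exists (tailr q, q ord0 ord0) => /=; split.
- by apply: IH => i; rewrite mxE.
- exact: js_mem.
- by rewrite ext_tail.
Qed.

Lemma sum_undup (R : realType) (T : eqType) (s : seq T) (f : T -> R) :
  (forall x, 0 <= f x) -> \sum_(x <- undup s) f x <= \sum_(x <- s) f x.
Proof.
move=> f0; elim: s => [|x s IH] //=.
case: ifP => _; rewrite !big_cons.
  by have := f0 x; lra.
by lra.
Qed.

Lemma sum_sub (R : realType) (T : eqType) (s1 s2 : seq T) (f : T -> R) :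
  (forall x, 0 <= f x) -> uniq s1 -> {subset s1 <= s2} ->
  \sum_(x <- s1) f x <= \sum_(x <- s2) f x.
Proof.
move=> f0 u1 sub; apply: le_trans (sum_undup _ f0).
rewrite [X in _ <= X](bigID (fun x => x \in s1)) /=.
have -> : \sum_(x <- undup s2 | x \in s1) f x = \sum_(x <- s1) f x.
  rewrite -big_filter; apply: perm_big; apply: uniq_perm.
  - by apply: filter_uniq; apply: undup_uniq.
  - exact: u1.
  - by move=> x; rewrite mem_filter mem_undup; apply/andP/idP => [[]//|h]; split=> //; apply: sub.
rewrite lerDl; apply: sumr_ge0 => x _; exact: f0.
Qed.

Lemma betaS_ge0 (R : realType) (nu : R) k : 0 < nu -> 0 <= betaS nu k.
Proof.
move=> nu0; elim: k => [|k IH] /=.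
  by apply: divr_ge0 => //; lra.
apply: mulr_ge0 => //; apply: addr_ge0 => //; apply: divr_ge0 => //.
by apply: addr_ge0 => //; lra.
Qed.

Unset Implicit Arguments.

Theorem lemma3p4 (R : realType) :
  (forall (nu : R) (d m : nat), 0 < nu -> (1 <= d)%N -> (1 <= m)%N ->
     (Isum d nu m <= (beta d nu / (m%:R `^ (2 * nu)))%:E)%E) /\
  (forall (nu : R) (d : nat), 1 / 2 <= nu -> (1 <= d)%N ->
     beta d nu <= 5 ^+ d.-1 / (2 * nu)).
Proof.
split.
- move=> nu [//|k] m nu0 _ m1.
  rewrite /Isum /esum /beta /=; apply: ge_ereal_sup => x [F [finF FD] <-].
  rewrite fsumEFin // lee_fin fsbig_finite //=.
  set N := \max_(p <- (fset_set F : seq _)) (p.1 + \max_(i < k) absz (p.2 ord0 i))%N.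
  set S := [seq (n, q) | n <- index_iota m.+1 N.+1, q <- box N k].
  apply: (@le_trans _ _ (\sum_(p <- S) @Iterm R k.+1 nu p)).  
    apply: sum_sub; [by move=> p; apply: powR_ge0 | exact: fset_uniq | ].
    - move=> [n q] hp; have hF : F (n, q) by move: hp; rewrite in_fset_set // => /set_mem.
      have hmn : (m < n)%N := FD _ hF.
      have hN := @leq_bigmax_seq _ (fset_set F : seq _) xpredT
          (fun p : nat * 'rV[int]_k => (p.1 + \max_(i < k) absz (p.2 ord0 i))%N) _ hp isT.
      rewrite -/N /= in hN.
      apply/allpairsP; exists (n, q) => /=; split => //.
        by rewrite mem_index_iota hmn ltnS; apply: leq_trans hN; apply: leq_addr.
      apply: box_mem => i; apply: leq_trans hN; apply: leq_trans (leq_addl _ _).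
      exact: (@leq_bigmax _ (fun i => absz (q ord0 i)) i).
  rewrite /S big_allpairs_dep /=.
  exact: main_ineq.
- move=> nu [//|k] nu2 _; rewrite /beta /=.
  have nu0 : 0 < nu by lra.
  elim: k => [|k IH] /=; first by rewrite expr0.
  rewrite exprS.
  have -> : 5 * 5 ^+ k / (2 * nu) = 5 * (5 ^+ k / (2 * nu)) by rewrite mulrA.
  apply: ler_pM => //.
  + apply: addr_ge0 => //; apply: divr_ge0 => //; apply: addr_ge0 => //; lra.
  + exact: betaS_ge0.
  + have hk : 2 <= 2 * nu + (k.+1)%:R.
      have : 1 <= (k.+1)%:R :> R by rewrite ler1n.
      lra.
    have : 2 / (2 * nu + (k.+1)%:R) <= 1.
      by rewrite ler_pdivrMr ?mul1r //; lra.
    lra.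
Qed.
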